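(* For any valid scheme (satisfying (C1)–(C8)) with $N\ge1$, $K\ge2$, and any $k\in\{2,\dots,K\}$, letting $\mathcal{R}_U'$ be the user-side common randomness provided by the user privacy constraint (C6) for the message indices $k-1$ and $k$, \[ I\big(W_{k:K};Q_{1:N}^{[k-1,\mathcal{R}_U]},A_{1:N}^{[k-1,\mathcal{R}_U]},\mathcal{R}_S\,\big|\,W_{1:k-1}\big)\ \ge\ \frac1N\, I\big(W_{k+1:K};Q_{1:N}^{[k,\mathcal{R}_U']},A_{1:N}^{[k,\mathcal{R}_U']},\mathcal{R}_S\,\big|\,W_{1:k}\big)+\frac{L}{N}, \] where $W_{K+1:K}$ is empty (so the mutual information term is $0$ when $k=K$).
   Context: Model (SPIR with user-side common randomness). There are $N\ge1$ non-colluding databases, each storing the same $K\ge2$ messages $W_1,\dots,W_K$. Each message consists of $L$ i.i.d. symbols uniform over a sufficiently large finite field $\mathbb{F}_q$; entropies are in $q$-ary units, so $H(W_k)=L$ and $H(W_{1:K})=KL$. The databases share server-side common randomness $\mathcal{R}_S$, unknown to the user. The user holds user-side common randomness $\mathcal{R}_U$, a subset of the components of $\mathcal{R}_S$, unknown to the databases except for its size (uniform over subsets of given cardinality). $\mathcal{F}$ is the user's retrieval-strategy randomness. To retrieve $W_k$ the user sends $Q_n^{[k,\mathcal{R}_U]}$ to database $n$, receiving $A_n^{[k,\mathcal{R}_U]}$; $W_{\bar k}=\{W_j:j\ne k\}$. A valid scheme satisfies for all $k,n,\mathcal{R}_U$: (C1) $I(W_{1:K};k,\mathcal{F},\mathcal{R}_S,\mathcal{R}_U)=0$;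 (C2) $I(Q_{1:N}^{[k,\mathcal{R}_U]};W_{1:K},\mathcal{R}_S\setminus\mathcal{R}_U)=0$; (C3) $H(Q_{1:N}^{[k,\mathcal{R}_U]}\mid\mathcal{F})=0$; (C4) $H(A_n^{[k,\mathcal{R}_U]}\mid Q_n^{[k,\mathcal{R}_U]},W_{1:K},\mathcal{R}_S)=0$; (C5) $H(W_k\mid\mathcal{F},A_{1:N}^{[k,\mathcal{R}_U]},\mathcal{R}_U)=0$; (C6) user privacy: for all $k,k',n,\mathcal{R}_U$ there is $\mathcal{R}_U'$ with $H(\mathcal{R}_U')=H(\mathcal{R}_U)$ and $(Q_n^{[k,\mathcal{R}_U]},A_n^{[k,\mathcal{R}_U]},W_{1:K},\mathcal{R}_S)\sim(Q_n^{[k',\mathcal{R}_U']},A_n^{[k',\mathcal{R}_U']},W_{1:K},\mathcal{R}_S)$; (C7) $I(W_{\bar k};\mathcal{F},A_{1:N}^{[k,\mathcal{R}_U]},\mathcal{R}_U)=0$; (C8) $I(\mathcal{R}_S\setminus\mathcal{R}_U;\mathcal{F},A_{1:N}^{[k,\mathcal{R}_U]},W_k,\mathcal{R}_U)=0$. *)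

(* Defs.v *)
From HB Require Import structures.
From mathcomp Require Import all_boot all_order all_algebra all_field.
From mathcomp Require Import reals exp.
Set Implicit Arguments. Unset Strict Implicit. Unset Printing Implicit Defensive.
Import Order.TTheory GRing.Theory Num.Theory.
Local Open Scope ring_scope.

Section InfoTheory.
Variables (R : realType) (Omega : finType) (P : {ffun Omega -> R}).

Definition is_dist : Prop := (forall w, 0 <= P w) /\ \sum_w P w = 1.

Definition pr (T : finType) (X : Omega -> T) (y : T) : R :=
  \sum_(w | X w == y) P w.

Definition jointRV (T U : finType) (X : Omega -> T) (Y : Omega -> U) :
  Omega -> T * U := fun w => (X w, Y w).

Variable q : nat.

Definition ent (T : finType) (X : Omega -> T) : R :=
  - (\sum_(y : T) pr X y * ln (pr X y)) / ln q%:R.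

Definition cent (T U : finType) (X : Omega -> T) (Y : Omega -> U) : R :=
  ent (jointRV X Y) - ent Y.

Definition mi (T U : finType) (X : Omega -> T) (Y : Omega -> U) : R :=
  ent X + ent Y - ent (jointRV X Y).

Definition cmi (T U V : finType) (X : Omega -> T) (Y : Omega -> U)
  (Z : Omega -> V) : R :=
  ent (jointRV X Z) + ent (jointRV Y Z) - ent (jointRV (jointRV X Y) Z) - ent Z.

End InfoTheory.

Section SPIR.
Variables (Omega : finType) (Fq : finFieldType) (S : finType)
          (K L N M : nat).

Definition msgT := {ffun 'I_L -> Fq}.

(* Messages are indexed 1..K (W k for k = 1..K; other indices unused). *)
Variable W : nat -> Omega -> msgT.

(* W_{lo:hi} = (W_j)_{lo <= j <= hi}, encoded as a K-tuple with None outside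
   the range (an injective re-encoding of the sub-tuple). *)
Definition Wsub (lo hi : nat) : Omega -> {ffun 'I_K -> option msgT} :=
  fun w => [ffun i : 'I_K => if (lo <= i.+1 <= hi)%N then Some (W i.+1 w) else None].

Definition Wall : Omega -> {ffun 'I_K -> msgT} :=
  fun w => [ffun i : 'I_K => W i.+1 w].

Definition Wbar (k : nat) : Omega -> {ffun 'I_K -> option msgT} :=
  fun w => [ffun i : 'I_K => if i.+1 != k then Some (W i.+1 w) else None].

Variable RS : Omega -> {ffun 'I_M -> S}.

(* user-side common randomness R_U = components of R_S indexed by T *)
Definition RU (T : {set 'I_M}) : Omega -> {ffun 'I_M -> option S} :=
  fun w => [ffun i => if i \in T then Some (RS w i) else None].

Definition RSminus (T : {set 'I_M}) : Omega -> {ffun 'I_M -> option S} :=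
  fun w => [ffun i => if i \notin T then Some (RS w i) else None].

Variables (QT AT FT : finType).
Variable Fr : Omega -> FT.
(* Q k T n : query to database n for message k with user randomness R_U(T) *)
Variable Q : nat -> {set 'I_M} -> 'I_N -> Omega -> QT.
Variable A : nat -> {set 'I_M} -> 'I_N -> Omega -> AT.

Definition Qall (k : nat) (T : {set 'I_M}) : Omega -> {ffun 'I_N -> QT} :=
  fun w => [ffun n => Q k T n w].
Definition Aall (k : nat) (T : {set 'I_M}) : Omega -> {ffun 'I_N -> AT} :=
  fun w => [ffun n => A k T n w].

Variables (R : realType) (P : {ffun Omega -> R}).
Variable m : nat.

Let q := #|Fq|.
Let H (T : finType) (X : Omega -> T) := ent P q X.
Let I (T U : finType) (X : Omega -> T) (Y : Omega -> U) := mi P q X Y.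

Definition valid_scheme : Prop :=
  is_dist P /\
   (forall x, pr P Wall x = 1 / (q ^ (K * L))%:R) /\
   (forall T : {set 'I_M}, #|T| = m ->
      I Wall (jointRV (jointRV Fr RS) (RU T)) = 0) /\
   (forall k (T : {set 'I_M}), (1 <= k <= K)%N -> #|T| = m ->
      I (Qall k T) (jointRV Wall (RSminus T)) = 0) /\
   (forall k (T : {set 'I_M}), (1 <= k <= K)%N -> #|T| = m ->
      cent P q (Qall k T) Fr = 0) /\
   (forall k (T : {set 'I_M}) n, (1 <= k <= K)%N -> #|T| = m ->
      cent P q (A k T n) (jointRV (jointRV (Q k T n) Wall) RS) = 0) /\
   (forall k (T : {set 'I_M}), (1 <= k <= K)%N -> #|T| = m ->
      cent P q (W k) (jointRV (jointRV Fr (Aall k T)) (RU T)) = 0) /\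
   (* (C6) user privacy *)
   (forall k k' n (T : {set 'I_M}), (1 <= k <= K)%N -> (1 <= k' <= K)%N -> #|T| = m ->
      exists T' : {set 'I_M}, [/\ #|T'| = m, H (RU T') = H (RU T) &
        forall x, pr P (jointRV (jointRV (jointRV (Q k T n) (A k T n)) Wall) RS) x
                = pr P (jointRV (jointRV (jointRV (Q k' T' n) (A k' T' n)) Wall) RS) x]) /\
   (forall k (T : {set 'I_M}), (1 <= k <= K)%N -> #|T| = m ->
      I (Wbar k) (jointRV (jointRV Fr (Aall k T)) (RU T)) = 0) /\
   (forall k (T : {set 'I_M}), (1 <= k <= K)%N -> #|T| = m ->
      I (RSminus T) (jointRV (jointRV (jointRV Fr (Aall k T)) (W k)) (RU T)) = 0).

End SPIR.

(* Main.v *)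
Require Import Defs.
From HB Require Import structures.
From mathcomp Require Import all_boot all_order all_algebra all_field.
From mathcomp Require Import reals exp.
From mathcomp Require Import ring lra zify.
Set Implicit Arguments. Unset Strict Implicit. Unset Printing Implicit Defensive.
Import Order.TTheory GRing.Theory Num.Theory.
Local Open Scope ring_scope.

Section Gen.
Variables (R : realType) (Omega : finType) (P : {ffun Omega -> R}) (q : nat).
Hypothesis HP0 : forall w, 0 <= P w.
Hypothesis HP1 : \sum_w P w = 1.
Hypothesis Hq : (1 < q)%N.

Local Notation H := (ent P q).
Local Notation pr := (pr P).

Definition det (T U : finType) (X : Omega -> T) (Y : Omega -> U) :=
  forall w w', P w != 0 -> P w' != 0 -> X w = X w' -> Y w = Y w'.

Lemma sum_pr (T : finType) (X : Omega -> T) (F : T -> R) :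
  \sum_w P w * F (X w) = \sum_y pr X y * F y.
Proof.
rewrite (partition_big X predT) //=. apply: eq_bigr => y _.
rewrite /Defs.pr big_distrl /=. by apply: eq_bigr => w /eqP <-.
Qed.

Lemma ent_omega (T : finType) (X : Omega -> T) :
  H X = - (\sum_w P w * ln (pr X (X w))) / ln q%:R.
Proof. by rewrite /ent (sum_pr X (fun y => ln (pr X y))). Qed.

Lemma lnq_gt0 : 0 < ln (q%:R : R).
Proof. apply: ln_gt0. by rewrite ltr1n. Qed.

Lemma pr_ge0 (T : finType) (X : Omega -> T) y : 0 <= pr X y.
Proof. by apply: sumr_ge0 => w _. Qed.

Lemma pr_geP (T : finType) (X : Omega -> T) w : P w <= pr X (X w).
Proof.
rewrite /Defs.pr (bigD1 w) //= lerDl. by apply: sumr_ge0 => *.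
Qed.

Lemma pr_gt0 (T : finType) (X : Omega -> T) w : P w != 0 -> 0 < pr X (X w).
Proof.
move=> Pw; apply: lt_le_trans (pr_geP X w). by rewrite lt_def Pw HP0.
Qed.

Lemma pr_supp (T : finType) (X : Omega -> T) y :
  pr X y = \sum_(w | (X w == y) && (P w != 0)) P w.
Proof.
rewrite /Defs.pr (bigID (fun w => P w != 0)) /= [X in _ + X]big1 ?addr0 //.
by move=> w /andP [_]; rewrite negbK => /eqP.
Qed.

Lemma ent_equiv (T U : finType) (X : Omega -> T) (Y : Omega -> U) :
  det X Y -> det Y X -> H X = H Y.
Proof.
move=> dXY dYX; rewrite !ent_omega; congr (- _ / _).
apply: eq_bigr => w _.
have [->|Pw] := eqVneq (P w) 0; first by rewrite !mul0r.
congr (_ * ln _); rewrite !pr_supp; apply: eq_bigl => w'.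
apply/andP/andP => -[/eqP e Pw']; split => //; apply/eqP.
- exact: dXY.
- exact: dYX.
Qed.

Lemma det_refl (T : finType) (X : Omega -> T) : det X X.
Proof. by move=> w w' _ _. Qed.

Lemma det_trans (T U V : finType) (X : Omega -> T) (Y : Omega -> U) (Z : Omega -> V) :
  det X Y -> det Y Z -> det X Z.
Proof. move=> d1 d2 w w' p p' e; apply: d2 => //; exact: d1. Qed.

Lemma det_fst (T U : finType) (X : Omega -> T) (Y : Omega -> U) : det (jointRV X Y) X.
Proof. by move=> w w' _ _ [e _]. Qed.

Lemma det_snd (T U : finType) (X : Omega -> T) (Y : Omega -> U) : det (jointRV X Y) Y.
Proof. by move=> w w' _ _ [_ e]. Qed.

Arguments det_fst {T U} X Y [w w'].
Arguments det_snd {T U} X Y [w w'].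

Lemma det_pair (T U V : finType) (X : Omega -> T) (Y : Omega -> U) (Z : Omega -> V) :
  det X Y -> det X Z -> det X (jointRV Y Z).
Proof. move=> d1 d2 w w' p p' e; rewrite /jointRV (d1 w w') ?(d2 w w') //. Qed.

Lemma det_fun (T U : finType) (X : Omega -> T) (Y : Omega -> U) (f : T -> U) :
  (forall w, Y w = f (X w)) -> det X Y.
Proof. by move=> e w w' _ _ ex; rewrite !e ex. Qed.


Lemma ln_le (x : R) : 0 < x -> ln x <= x - 1.
Proof.
move=> x0; have := @le_ln1Dx R (x - 1).
have e : 1 + (x - 1) = x by rewrite addrC subrK.
rewrite e; apply; by rewrite ltrBrDr addNr.
Qed.

Lemma marg (T V : finType) (X : Omega -> T) (Z : Omega -> V) z :
  \sum_x pr (jointRV X Z) (x, z) = pr Z z.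
Proof.
rewrite [RHS]/Defs.pr (partition_big X predT) //=.
apply: eq_bigr => x _; apply: eq_bigl => w.
by rewrite /jointRV xpair_eqE andbC.
Qed.


Lemma sum_pr1 (T : finType) (X : Omega -> T) : \sum_y pr X y = 1.
Proof.
have := sum_pr X (fun _ => 1). rewrite (eq_bigr (fun w => P w)) ?HP1; last by move=> *; rewrite mulr1.
by move=> ->; apply: eq_bigr => *; rewrite mulr1.
Qed.

Lemma cmi_ge0 (T U V : finType) (X : Omega -> T) (Y : Omega -> U) (Z : Omega -> V) :
  0 <= cmi P q X Y Z.
Proof.
rewrite /cmi !ent_omega.
set XZ := jointRV X Z; set YZ := jointRV Y Z; set XYZ := jointRV (jointRV X Y) Z.
set F := fun w => pr XZ (XZ w) * pr YZ (YZ w) / (pr XYZ (XYZ w) * pr Z (Z w)).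
have key : \sum_w P w * F w <= 1.
  pose G := fun v : (T * U) * V => pr XZ (v.1.1, v.2) * pr YZ (v.1.2, v.2) /
                                   (pr XYZ v * pr Z v.2).
  have -> : \sum_w P w * F w = \sum_v pr XYZ v * G v by rewrite -sum_pr.
  pose G2 := fun v : (T * U) * V => pr XZ (v.1.1, v.2) * (pr YZ (v.1.2, v.2) / pr Z v.2).
  apply: (@le_trans _ _ (\sum_v G2 v)).
    apply: ler_sum => v _; rewrite /G /G2.
    have [->|pv] := eqVneq (pr XYZ v) 0.
      by rewrite mul0r mulr_ge0 ?divr_ge0 ?pr_ge0.
    have [->|pz] := eqVneq (pr Z v.2) 0.
      by rewrite !(mulr0, invr0, mul0r).
    set a := pr XZ _; set b := pr YZ _.
    suff -> : pr XYZ v * (a * b / (pr XYZ v * pr Z v.2)) = a * (b / pr Z v.2) by [].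
    field. by rewrite pv pz.
  rewrite -(pair_bigA _ (fun a z => G2 (a, z))) /=.
  rewrite -(pair_bigA _ (fun x y => \sum_z G2 ((x, y), z))) /=.
  under eq_bigr => x _ do rewrite exchange_big /=.
  rewrite exchange_big /= -(sum_pr1 Z) ler_sum // => z _.
  rewrite /G2 /=.
  under eq_bigr => x _ do rewrite -mulr_sumr -mulr_suml marg.
  rewrite -mulr_suml marg.
  have [->|pz] := eqVneq (pr Z z) 0; first by rewrite mul0r.
  by rewrite mulfV // mulr1.
set s1 := \sum_w _ * ln (pr XZ _); set s2 := \sum_w _ * ln (pr YZ _).
set s3 := \sum_w _ * ln (pr XYZ _); set s4 := \sum_w _ * ln (pr Z _).
have -> : - s1 / ln q%:R + - s2 / ln q%:R - - s3 / ln q%:R - - s4 / ln q%:R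
   = (s3 + s4 - s1 - s2) / ln q%:R by ring.
apply: divr_ge0; last exact: ltW lnq_gt0.
have hnum : \sum_w P w * (1 - F w) <= s3 + s4 - s1 - s2.
  rewrite /s1 /s2 /s3 /s4 -big_split -!sumrB /= ler_sum // => w _.
  have [->|Pw] := eqVneq (P w) 0; first by rewrite !mul0r !subr0 addr0.
  set a := pr XZ _; set b := pr YZ _; set c := pr XYZ _; set d := pr Z _.
  have -> : P w * ln c + P w * ln d - P w * ln a - P w * ln b =
            P w * (ln c + ln d - ln a - ln b) by ring.
  rewrite ler_pM2l; last by rewrite lt_def Pw HP0.
  have a0 := pr_gt0 XZ Pw; have b0 := pr_gt0 YZ Pw.
  have c0 := pr_gt0 XYZ Pw; have d0 := pr_gt0 Z Pw.
  have := ln_le (x := F w); rewrite /F.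
  rewrite ln_div ?lnM ?posrE ?mulr_gt0 ?divr_gt0 ?invr_gt0 ?mulr_gt0 //.
  move=> /(_ isT); lra.
apply: le_trans hnum.
under eq_bigr => w _ do rewrite mulrBr mulr1.
by rewrite sumrB HP1 subr_ge0.
Qed.


Lemma det_const (T : finType) (X : Omega -> T) : det X (fun _ => tt).
Proof. by []. Qed.

Ltac det_auto :=
  match goal with
  | |- @det _ _ _ (fun _ => tt) => apply: det_const
  | |- @det _ _ _ (jointRV _ _) => apply: det_pair; det_auto
  | |- @det _ _ ?A ?A => apply: det_refl
  | |- @det _ _ (jointRV ?A1 ?A2) _ =>
      first [ apply: (det_trans (det_fst A1 A2)); det_auto
            | apply: (det_trans (det_snd A1 A2)); det_auto
            | match goal with h : @det _ _ _ _ |- _ => apply: (det_trans _ h); det_auto end ]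
  | h : @det _ _ _ _ |- _ => apply: (det_trans _ h); det_auto
  end.

Lemma ent_joint_det (T U : finType) (X : Omega -> T) (Y : Omega -> U) :
  det X Y -> H (jointRV X Y) = H X.
Proof. move=> d; apply: ent_equiv; det_auto. Qed.

Lemma ent_le_det (T U : finType) (X : Omega -> T) (Y : Omega -> U) :
  det Y X -> H X <= H Y.
Proof.
move=> d; have := cmi_ge0 Y Y X; rewrite /cmi.
have -> : H (jointRV (jointRV Y Y) X) = H (jointRV Y X) by apply: ent_equiv; det_auto.
rewrite ent_joint_det //; lra.
Qed.

Lemma cent_ge0 (T U : finType) (X : Omega -> T) (Y : Omega -> U) : 0 <= cent P q X Y.
Proof. rewrite /cent subr_ge0; apply: ent_le_det; det_auto. Qed.

Lemma cond_red (T U V : finType) (X : Omega -> T) (Y : Omega -> U) (Z : Omega -> V) :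
  det Y Z -> cent P q X Y <= cent P q X Z.
Proof.
move=> d; have := cmi_ge0 X Y Z; rewrite /cmi /cent.
have -> : H (jointRV Y Z) = H Y by apply: ent_equiv; det_auto.
have -> : H (jointRV (jointRV X Y) Z) = H (jointRV X Y) by apply: ent_equiv; det_auto.
lra.
Qed.

Lemma cmi_swap (T U V : finType) (X : Omega -> T) (Y : Omega -> U) (Z : Omega -> V) :
  cmi P q X Y Z = cmi P q Y X Z.
Proof.
rewrite /cmi.
have -> : H (jointRV (jointRV X Y) Z) = H (jointRV (jointRV Y X) Z) by apply: ent_equiv; det_auto.
lra.
Qed.

Lemma cmi_mono2 (T U U' V : finType) (X : Omega -> T) (Y : Omega -> U) (Y' : Omega -> U')
  (Z : Omega -> V) : det Y Y' -> cmi P q X Y' Z <= cmi P q X Y Z.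
Proof.
move=> d; have := cmi_ge0 X Y (jointRV Y' Z); rewrite /cmi.
have -> : H (jointRV X (jointRV Y' Z)) = H (jointRV (jointRV X Y') Z) by apply: ent_equiv; det_auto.
have -> : H (jointRV Y (jointRV Y' Z)) = H (jointRV Y Z) by apply: ent_equiv; det_auto.
have -> : H (jointRV (jointRV X Y) (jointRV Y' Z)) = H (jointRV (jointRV X Y) Z)
  by apply: ent_equiv; det_auto.
lra.
Qed.

Lemma cmi_mono1 (T T' U V : finType) (X : Omega -> T) (X' : Omega -> T') (Y : Omega -> U)
  (Z : Omega -> V) : det X X' -> cmi P q X' Y Z <= cmi P q X Y Z.
Proof. move=> d; rewrite cmi_swap [X in _ <= X]cmi_swap; exact: cmi_mono2. Qed.

Lemma ent_const : H (fun _ : Omega => tt) = 0.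
Proof.
rewrite ent_omega.
have -> : pr (fun _ : Omega => tt) tt = 1 by rewrite /Defs.pr -HP1.
by rewrite ln1 big1 ?oppr0 ?mul0r // => w _; rewrite mulr0.
Qed.

Lemma mi_cmi (T U : finType) (X : Omega -> T) (Y : Omega -> U) :
  mi P q X Y = cmi P q X Y (fun _ => tt).
Proof.
rewrite /mi /cmi ent_const.
rewrite (@ent_equiv _ _ (jointRV X (fun _ => tt)) X); try det_auto.
rewrite (@ent_equiv _ _ (jointRV Y (fun _ => tt)) Y); try det_auto.
rewrite (@ent_equiv _ _ (jointRV (jointRV X Y) (fun _ => tt)) (jointRV X Y)); try det_auto.
lra.
Qed.

Lemma mi_ge0 (T U : finType) (X : Omega -> T) (Y : Omega -> U) : 0 <= mi P q X Y.
Proof. rewrite mi_cmi; exact: cmi_ge0. Qed.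

Lemma mi_mono (T T' U U' : finType) (X : Omega -> T) (X' : Omega -> T') (Y : Omega -> U)
  (Y' : Omega -> U') : det X X' -> det Y Y' -> mi P q X' Y' <= mi P q X Y.
Proof.
move=> d1 d2; rewrite !mi_cmi; apply: le_trans (cmi_mono2 _ _ d2).
exact: cmi_mono1.
Qed.

Lemma pr_comp (T V : finType) (X : Omega -> T) (Vr : Omega -> V) (f : V -> T) u :
  (forall w, X w = f (Vr w)) -> pr X u = \sum_(v | f v == u) pr Vr v.
Proof.
move=> e; rewrite /Defs.pr (eq_bigl (fun w => f (Vr w) == u)); last by move=> w; rewrite e.
rewrite (partition_big Vr (fun v => f v == u)) //.
apply: eq_bigr => v /eqP fv; apply: eq_bigl => w.
by case: (Vr w =P v) => [->|_]; rewrite ?fv ?eqxx ?andbF.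
Qed.

Lemma ent_dist (T V : finType) (V1 V2 : Omega -> V) (f : V -> T) (X1 X2 : Omega -> T) :
  (forall w, X1 w = f (V1 w)) -> (forall w, X2 w = f (V2 w)) ->
  (forall v, pr V1 v = pr V2 v) -> H X1 = H X2.
Proof.
move=> e1 e2 e.
have pe : forall u, pr X1 u = pr X2 u.
  move=> u; rewrite (pr_comp u e1) (pr_comp u e2).
  by apply: eq_bigr => v _; rewrite e.
by rewrite /ent; congr (- _ / _); apply: eq_bigr => u _; rewrite pe.
Qed.

Lemma pr_split (T U : finType) (X : Omega -> T) (Y : Omega -> U) w :
  pr Y (Y w) = pr (jointRV X Y) (jointRV X Y w) +
     \sum_(w' | (Y w' == Y w) && (X w' != X w)) P w'.
Proof.
rewrite /Defs.pr (bigID (fun w' => X w' == X w)) /=; congr (_ + _).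
by apply: eq_bigl => w'; rewrite /jointRV xpair_eqE andbC.
Qed.

Lemma cent0_det (T U : finType) (X : Omega -> T) (Y : Omega -> U) :
  cent P q X Y = 0 -> det Y X.
Proof.
rewrite /cent !ent_omega.
set S1 := \sum_w _ * ln (pr (jointRV X Y) _); set S2 := \sum_w _ * ln (pr Y _).
have -> : - S1 / ln q%:R - - S2 / ln q%:R = (S2 - S1) / ln q%:R by ring.
move=> /eqP; rewrite mulf_eq0 invr_eq0 (negbTE (lt0r_neq0 lnq_gt0)) orbF subr_eq0 => /eqP e.
have hs : \sum_w P w * (ln (pr Y (Y w)) - ln (pr (jointRV X Y) (jointRV X Y w))) = S2 - S1.
  by rewrite /S1 /S2 -sumrB; apply: eq_bigr => w _; rewrite mulrBr.
rewrite e subrr in hs; move: hs.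
have ge : forall w, 0 <= P w * (ln (pr Y (Y w)) - ln (pr (jointRV X Y) (jointRV X Y w))).
  move=> w; have [->|Pw] := eqVneq (P w) 0; first by rewrite mul0r.
  rewrite mulr_ge0 // subr_ge0 ler_ln ?posrE ?pr_gt0 // (pr_split X Y w) lerDl.
  exact: sumr_ge0.
move=> /(psumr_eq0P (fun w _ => ge w)) h w w' Pw Pw' eY.
apply/eqP; apply: contraT => nX.
have := h w isT; move/eqP; rewrite mulf_eq0 (negbTE Pw) /= subr_eq0 => /eqP.
move/ln_inj; rewrite !posrE !pr_gt0 // => /(_ isT isT) /eqP.
rewrite (pr_split X Y w) -subr_eq0 addrC addKr => /eqP e0.
have := psumr_eq0P (fun w'' _ => HP0 w'') e0 (i := w').
by rewrite eY eqxx eq_sym nX => /(_ isT) /eqP; rewrite (negbTE Pw').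
Qed.

Lemma ent_bound (T : finType) (X : Omega -> T) (e : nat) :
  #|T| = (q ^ e)%N -> H X <= e%:R.
Proof.
move=> cT; set n : R := (q ^ e)%:R.
have n0 : 0 < n by rewrite ltr0n expn_gt0 (ltn_trans _ Hq).
have lnn : ln n = e%:R * ln q%:R by rewrite /n natrX lnXn ?ltr0n ?(ltn_trans _ Hq) // mulr_natl.
rewrite /ent ler_pdivrMr ?lnq_gt0 // -lnn.
suff : \sum_y (- (pr X y * ln (pr X y)) - pr X y * ln n) <= 0.
  by rewrite big_split /= !sumrN -big_distrl /= sum_pr1 mul1r; lra.
apply: (@le_trans _ _ (\sum_(y : T) (n^-1 - pr X y))).
  apply: ler_sum => y _.
  have [->|py] := eqVneq (pr X y) 0; first by rewrite !mul0r !oppr0 !addr0 invr_ge0 ltW.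
  have p0 : 0 < pr X y by rewrite lt_def py pr_ge0.
  have := ln_le (x := (n * pr X y)^-1); rewrite invr_gt0 mulr_gt0 // => /(_ isT).
  rewrite lnV ?posrE ?mulr_gt0 // lnM ?posrE // => h.
  have h2 := ler_wpM2l (ltW p0) h.
  have e2 : pr X y * ((n * pr X y)^-1 - 1) = n^-1 - pr X y.
    by field; rewrite py lt0r_neq0.
  rewrite e2 mulrN mulrDr in h2; lra.
by rewrite sumrB sum_pr1 sumr_const cT -mulr_natl -/n mulfV ?subrr // lt0r_neq0.
Qed.

Lemma ent_unif (T : finType) (X : Omega -> T) (e : nat) :
  #|T| = (q ^ e)%N -> (forall x, pr X x = 1 / (q ^ e)%:R) -> H X = e%:R.
Proof.
move=> cT hp; set n : R := (q ^ e)%:R.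
have n0 : 0 < n by rewrite ltr0n expn_gt0 (ltn_trans _ Hq).
have lnn : ln n = e%:R * ln q%:R by rewrite /n natrX lnXn ?ltr0n ?(ltn_trans _ Hq) // mulr_natl.
rewrite /ent; under eq_bigr do rewrite hp.
rewrite sumr_const cT.
have -> : (1 / (q ^ e)%:R * ln (1 / (q ^ e)%:R)) *+ (q ^ e)%N = - ln n :> R.
  rewrite -mulr_natl -/n div1r lnV ?posrE // mulrA mulfV ?mul1r //.
  exact: lt0r_neq0.
rewrite opprK lnn mulfK //; exact: lt0r_neq0 lnq_gt0.
Qed.

Lemma ent_ext (T : finType) (X Y : Omega -> T) : (forall w, X w = Y w) -> H X = H Y.
Proof.
move=> e; have pe : forall y, pr X y = pr Y y.
  by move=> y; apply: eq_bigl => w; rewrite e.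
by rewrite /ent; congr (- _ / _); apply: eq_bigr => u _; rewrite pe.
Qed.

Lemma cent_joint_le (T U V : finType) (X : Omega -> T) (Y : Omega -> U) (Z : Omega -> V) :
  cent P q (jointRV X Y) Z <= cent P q X Z + cent P q Y Z.
Proof. have := cmi_ge0 X Y Z; rewrite /cmi /cent; lra. Qed.

Lemma cent_subadd (N : nat) (AT V : finType) (A : 'I_N -> Omega -> AT)
  (X : Omega -> {ffun 'I_N -> AT}) (Z : Omega -> V) :
  (forall w n, X w n = A n w) ->
  cent P q X Z <= \sum_n cent P q (A n) Z.
Proof.
move=> hX.
pose Ap j := fun w => [ffun n : 'I_N => if (n < j)%N then Some (A n w) else None].
have step : forall j, cent P q (Ap j) Z <= \sum_(n : 'I_N | (n < j)%N) cent P q (A n) Z.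
  elim=> [|j IH].
    rewrite big_pred0; last by move=> n; rewrite ltn0.
    have d0 : det Z (Ap 0) by move=> w w' _ _ _; apply/ffunP => n; rewrite !ffunE.
    rewrite /cent (@ent_equiv _ _ (jointRV (Ap 0) Z) Z) ?subrr //; det_auto.
  case: (ltnP j N) => hj.
    set o := Ordinal hj.
    rewrite (bigD1 o) /=; last by rewrite ltnS leqnn.
    rewrite (eq_bigl (fun n : 'I_N => (n < j)%N)); last first.
      move=> n; rewrite ltnS leq_eqVlt; case: (ltnP n j) => h.
        by rewrite orbT /=; apply/eqP => e; move: h; rewrite e /= ltnn.
      rewrite orbF; case: eqP => //= e; apply/negbTE; rewrite negbK; apply/eqP; exact: val_inj.
    have ds : det (jointRV (Ap j) (A o)) (Ap j.+1).
      move=> w w' _ _ [e1 e2]; apply/ffunP => n; rewrite !ffunE.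
      case: (ltnP n j) => h.
        have hj1 : (n < j.+1)%N by rewrite ltnS ltnW.
        rewrite hj1.
        by have := congr1 (fun f : {ffun 'I_N -> option AT} => f n) e1; rewrite !ffunE h => -[->].
      rewrite ltnS; case: (leqP n j) => h2 //.
      have -> : n = o by apply: val_inj => /=; apply/eqP; rewrite eqn_leq h h2.
      by rewrite e2.
    apply: le_trans (_ : cent P q (jointRV (Ap j) (A o)) Z <= _).
      rewrite /cent lerD2r; apply: ent_le_det; det_auto.
    by apply: le_trans (cent_joint_le _ _ _) _; rewrite [X in X <= _]addrC lerD2l.
  have e : forall w, Ap j.+1 w = Ap j w.
    move=> w; apply/ffunP => n; rewrite !ffunE.
    have h : (n < j)%N := leq_trans (ltn_ord n) hj.
    by rewrite h ltnS ltnW.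
  rewrite /cent (@ent_ext _ (jointRV (Ap j.+1) Z) (jointRV (Ap j) Z)); last by move=> w; rewrite /jointRV e.
  rewrite (eq_bigl (fun n : 'I_N => (n < j)%N)) //.
  move=> n; have h : (n < j)%N := leq_trans (ltn_ord n) hj.
  by rewrite h ltnS ltnW.
apply: le_trans (_ : cent P q (Ap N) Z <= _).
  rewrite /cent lerD2r; apply: ent_le_det.
  have d : det (Ap N) X.
    move=> w w' _ _ e; apply/ffunP => n; rewrite !hX.
    by have := congr1 (fun f : {ffun 'I_N -> option AT} => f n) e; rewrite !ffunE ltn_ord => -[].
  det_auto.
apply: le_trans (step N) _; rewrite (eq_bigl (fun n : 'I_N => true)) ?lexx // => n; exact: ltn_ord.
Qed.

End Gen.

Section WsubFacts.
Variables (R : realType) (Omega : finType) (P : {ffun Omega -> R})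
  (Fq : finFieldType) (K L : nat) (W : nat -> Omega -> {ffun 'I_L -> Fq}).

Lemma wsub_eq_at lo hi w w' (i : 'I_K) :
  Wsub K W lo hi w = Wsub K W lo hi w' -> (lo <= i.+1 <= hi)%N -> W i.+1 w = W i.+1 w'.
Proof.
move=> e c; have := congr1 (fun f : {ffun 'I_K -> option (msgT Fq L)} => f i) e.
by rewrite !ffunE c => -[].
Qed.

Lemma det_Wall_Wsub lo hi : det P (Wall K W) (Wsub K W lo hi).
Proof.
move=> w w' _ _ e; apply/ffunP => i; rewrite !ffunE.
have := congr1 (fun f : {ffun 'I_K -> msgT Fq L} => f i) e; rewrite !ffunE => ->.
by [].
Qed.

Lemma det_Wsub_sub lo hi lo' hi' : (lo' <= lo)%N -> (hi <= hi')%N ->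
  det P (Wsub K W lo' hi') (Wsub K W lo hi).
Proof.
move=> h1 h2 w w' _ _ e; apply/ffunP => i; rewrite !ffunE.
case c: (lo <= i.+1 <= hi)%N => //.
rewrite (wsub_eq_at e) //; move/andP: c => [c1 c2]; apply/andP; split.
  exact: leq_trans h1 c1.
exact: leq_trans c2 h2.
Qed.

Lemma det_Wsub_W lo hi j : (lo <= j <= hi)%N -> (0 < j <= K)%N ->
  det P (Wsub K W lo hi) (W j).
Proof.
move=> c /andP [j0 jK] w w' _ _ e.
have jK' : (j.-1 < K)%N by rewrite prednK.
have := wsub_eq_at (i := Ordinal jK') e; rewrite /= prednK //; exact.
Qed.

Lemma det_Wall_W j : (0 < j <= K)%N -> det P (Wall K W) (W j).
Proof.
move=> c; apply: (det_trans (det_Wall_Wsub 1 K)); apply: det_Wsub_W => //.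
Qed.

Lemma det_split a b : b.+1 = a ->
  det P (jointRV (Wsub K W a K) (Wsub K W 1 b)) (Wall K W).
Proof.
move=> e w w' _ _ [e1 e2]; apply/ffunP => i; rewrite !ffunE.
case: (leqP i.+1 b) => h.
  by apply: (wsub_eq_at e2); rewrite h.
by apply: (wsub_eq_at e1); rewrite -e h /= ltn_ord.
Qed.

Lemma det_split' a b : b.+1 = a ->
  det P (jointRV (Wsub K W 1 b) (Wsub K W a K)) (Wall K W).
Proof.
move=> e w w' p p' [e1 e2]; apply: (det_split e) => //; by rewrite /jointRV e1 e2.
Qed.

Lemma det_ext b j : b.+1 = j ->
  det P (jointRV (W j) (Wsub K W 1 b)) (Wsub K W 1 j).
Proof.
move=> e w w' _ _ [e1 e2]; apply/ffunP => i; rewrite !ffunE.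
case c: (1 <= i.+1 <= j)%N => //; congr Some.
case: (leqP i.+1 b) => h.
  by apply: (wsub_eq_at e2); rewrite h.
have -> : i.+1 = j by move/andP: c => [_ c]; apply/eqP; rewrite eqn_leq c -e h.
exact: e1.
Qed.

End WsubFacts.

Section Arith.
Variables (R : realType) (Omega : finType) (P : {ffun Omega -> R}) (q : nat).
Local Notation H := (ent P q).
Lemma cmi_chain (T1 T2 T3 T4 T5 T6 : finType) (Wh : Omega -> T1) (Wk : Omega -> T2)
  (Wh' : Omega -> T3) (Wl : Omega -> T4) (Wl' : Omega -> T5) (Y : Omega -> T6) :
  H (jointRV Wh Wl) = H (jointRV Wh' Wl') -> H (jointRV Wk Wl) = H Wl' ->
  H (jointRV (jointRV Wk Y) Wl) = H (jointRV Y Wl') ->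
  H (jointRV (jointRV Wh Y) Wl) = H (jointRV (jointRV Wh' Y) Wl') ->
  cmi P q Wh Y Wl = cmi P q Wk Y Wl + cmi P q Wh' Y Wl'.
Proof. by rewrite /cmi => -> -> -> ->; ring. Qed.

Lemma stepG_arith (T1 T2 T3 T4 T5 T6 : finType) (Wk : Omega -> T1) (Y : Omega -> T2)
  (Wl : Omega -> T3) (Wl' : Omega -> T4) (Wh' : Omega -> T5) (Wal : Omega -> T6)
  (a b c Lr : R) :
  cent P q Wk (jointRV Y Wl) <= cent P q Wk Y ->
  H (jointRV (jointRV Wk Y) Wl) = H (jointRV Wk (jointRV Y Wl)) ->
  cent P q Wk Y <= 0 -> H Wl' <= H (jointRV Wk Wl) ->
  H Wal <= H (jointRV Wl' Wh') -> 0 <= mi P q Wl' Wh' ->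
  H Wal = a -> H Wl <= b -> H Wh' <= c -> a = b + c + Lr ->
  Lr <= cmi P q Wk Y Wl.
Proof. rewrite /cent /mi /cmi => g1 g2 g3 g4 g5 g6 g7 g8 g9 e; lra. Qed.

Lemma final_arith (x G c s a r Lr n : R) : 0 < n -> G <= c -> c <= s -> s <= n * x ->
  G = a + r -> Lr <= a -> n^-1 * r + Lr / n <= x.
Proof.
move=> n0 h1 h2 h3 h4 h5.
have h : Lr + r <= x * n by lra.
have -> : n^-1 * r + Lr / n = (Lr + r) / n by field; exact: lt0r_neq0.
by rewrite ler_pdivrMr.
Qed.
End Arith.

Ltac det_auto_f n :=
  lazymatch n with
  | O => fail
  | S ?m =>
  match goal with
  | |- @det _ _ _ _ _ _ (jointRV _ _) => apply: det_pair; det_auto_f n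
  | |- @det _ _ _ _ _ ?A ?A => apply: det_refl
  | |- @det _ _ _ _ _ (jointRV ?A1 ?A2) _ =>
      apply: (det_trans (det_fst (X:=A1) (Y:=A2))); det_auto_f m
  | |- @det _ _ _ _ _ (jointRV ?A1 ?A2) _ =>
      apply: (det_trans (det_snd (X:=A1) (Y:=A2))); det_auto_f m
  | h : @det _ _ _ _ _ _ _ |- _ => apply: (det_trans _ h); det_auto_f m
  end end.
Ltac det_auto := det_auto_f 5%nat.

Section Main.
Variables (R : realType) (Omega : finType) (P : {ffun Omega -> R})
  (Fq : finFieldType) (S QT AT FT : finType) (K L N M m : nat)
  (W : nat -> Omega -> {ffun 'I_L -> Fq}) (RS : Omega -> {ffun 'I_M -> S})
  (Fr : Omega -> FT)
  (Q : nat -> {set 'I_M} -> 'I_N -> Omega -> QT)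
  (A : nat -> {set 'I_M} -> 'I_N -> Omega -> AT)
  (k : nat) (T T' : {set 'I_M}).
Hypotheses (HP0 : forall w, 0 <= P w) (HP1 : \sum_w P w = 1).
Hypotheses (N1 : (1 <= N)%N) (k2 : (2 <= k)%N) (kK : (k <= K)%N).

Local Notation q := #|Fq|.
Let Hq : (1 < q)%N. Proof. exact: card_finNzRing_gt1. Qed.
Local Notation H := (ent P q).

Lemma Wsub_bound a b : (b <= K)%N -> H (Wsub K W a.+1 b) <= ((b - a) * L)%:R.
Proof.
have entc : forall (TT : finType) (X : Omega -> TT), (forall w w', X w = X w') -> H X = 0.
  move=> TT X c; rewrite (@ent_equiv _ _ _ q _ _ X (fun _ => tt)) ?(ent_const q HP1) //.
elim: b => [|b IH] bK.
  rewrite entc // => w w'; apply/ffunP => i; rewrite !ffunE.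
  by rewrite ltn0 andbF.
case: (leqP a b) => ab; last first.
  rewrite entc ?ler0n // => w w'; apply/ffunP => i; rewrite !ffunE.
  case c: (a.+1 <= i.+1 <= b.+1)%N => //; exfalso; move/andP: c => [c1 c2].
  by have := leq_trans c1 c2; rewrite ltnS leqNgt ab.
have d : det P (jointRV (Wsub K W a.+1 b) (W b.+1)) (Wsub K W a.+1 b.+1).
  move=> w w' _ _ [e1 e2]; apply/ffunP => i; rewrite !ffunE.
  case c: (a.+1 <= i.+1 <= b.+1)%N => //; congr Some.
  case: (leqP i.+1 b) => h.
    by apply: (wsub_eq_at e1); move/andP: c => [-> _].
  have -> : i.+1 = b.+1 by move/andP: c => [_ c]; apply/eqP; rewrite eqn_leq c h.
  exact: e2.
apply: le_trans (ent_le_det HP0 HP1 Hq d) _.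
apply: le_trans (_ : H (Wsub K W a.+1 b) + H (W b.+1) <= _).
  have := mi_ge0 HP0 HP1 Hq (Wsub K W a.+1 b) (W b.+1); rewrite /mi; lra.
have -> : ((b.+1 - a) * L)%N = ((b - a) * L + L)%N by rewrite subSn // mulSn addnC.
rewrite natrD; apply: lerD; first exact: IH (ltnW bK).
apply: (ent_bound HP0 HP1 Hq); rewrite card_ffun card_ord //.
Qed.

Definition wsubf (Tm : Type) (K' : nat) lo hi (x : {ffun 'I_K' -> Tm}) :
  {ffun 'I_K' -> option Tm} :=
  [ffun i : 'I_K' => if (lo <= i.+1 <= hi)%N then Some (x i) else None].

Lemma Wsub_f lo hi w : Wsub K W lo hi w = wsubf lo hi (Wall K W w).
Proof. by apply/ffunP => i; rewrite !ffunE. Qed.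

Hypothesis dQ2 : det P Fr (Qall Q k T').
Hypothesis dA2n : forall n, det P (jointRV (jointRV (Q k T' n) (Wall K W)) RS) (A k T' n).
Hypothesis dWk : det P (jointRV (jointRV Fr (Aall A k T')) (RU RS T')) (W k).
Hypothesis indep : mi P q (Wall K W) (jointRV (jointRV Fr RS) (RU RS T')) = 0.
Hypothesis unif : forall x, pr P (Wall K W) x = 1 / (q ^ (K * L))%:R.
Hypothesis hdist : forall n x,
  pr P (jointRV (jointRV (jointRV (Q k.-1 T n) (A k.-1 T n)) (Wall K W)) RS) x
  = pr P (jointRV (jointRV (jointRV (Q k T' n) (A k T' n)) (Wall K W)) RS) x.

Local Notation Wal := (Wall K W).
Local Notation Wl := (Wsub K W 1 k.-1).
Local Notation Wh := (Wsub K W k K).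
Local Notation Wh' := (Wsub K W k.+1 K).
Local Notation Wl' := (Wsub K W 1 k).
Local Notation Q2 := (Qall Q k T').
Local Notation A2 := (Aall A k T').
Local Notation Y2 := (jointRV (jointRV Q2 A2) RS).
Local Notation C := (jointRV Q2 RS).
Local Notation Z := (jointRV C Wl).
Local Notation D := (jointRV (jointRV Fr RS) (RU RS T')).
Local Notation Y1 := (jointRV (jointRV (Qall Q k.-1 T) (Aall A k.-1 T)) RS).
Local Notation Y1n n := (jointRV (jointRV (Q k.-1 T n) (A k.-1 T n)) RS).
Local Notation Y2n n := (jointRV (jointRV (Q k T' n) (A k T' n)) RS).
Local Notation Cn n := (jointRV (Q k T' n) RS).

Lemma dRU : det P RS (RU RS T').
Proof. by move=> w w' _ _ e; rewrite /RU e. Qed.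

Lemma dQn (j : nat) (U : {set 'I_M}) n : det P (Qall Q j U) (Q j U n).
Proof.
move=> w w' _ _ e.
by have := congr1 (fun f : {ffun 'I_N -> QT} => f n) e; rewrite !ffunE.
Qed.

Lemma dAn (j : nat) (U : {set 'I_M}) n : det P (Aall A j U) (A j U n).
Proof.
move=> w w' _ _ e.
by have := congr1 (fun f : {ffun 'I_N -> AT} => f n) e; rewrite !ffunE.
Qed.

Lemma dA2 : det P (jointRV (jointRV Q2 Wal) RS) A2.
Proof.
move=> w w' p p' [e1 e2 e3]; apply/ffunP => n; rewrite !ffunE.
apply: (@dA2n n w w' p p').
have := congr1 (fun f : {ffun 'I_N -> QT} => f n) e1; rewrite !ffunE => e4.
by rewrite /jointRV e4 e2 e3.
Qed.

Lemma k1 : (k.-1).+1 = k. Proof. by rewrite prednK // (ltn_trans _ k2). Qed.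

Lemma stepA n : cmi P q Wh (Y1n n) Wl <= cmi P q Wh Y1 Wl.
Proof.
apply: (cmi_mono2 HP0 HP1 Hq).
have h1 := @dQn k.-1 T n; have h2 := @dAn k.-1 T n; det_auto.
Qed.

Lemma stepB n : cmi P q Wh (Y1n n) Wl = cmi P q Wh (Y2n n) Wl.
Proof.
rewrite /cmi.
have e1 : H (jointRV (Y1n n) Wl) = H (jointRV (Y2n n) Wl).
  apply: (@ent_dist R Omega P q _ _ _ _
     (fun v => (((v.1.1.1, v.1.1.2), v.2), wsubf 1 k.-1 v.1.2)) _ _ _ _ (@hdist n));
  by move=> w; rewrite /jointRV Wsub_f.
have e2 : H (jointRV (jointRV Wh (Y1n n)) Wl) = H (jointRV (jointRV Wh (Y2n n)) Wl).
  apply: (@ent_dist R Omega P q _ _ _ _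
     (fun v => ((wsubf k K v.1.2, ((v.1.1.1, v.1.1.2), v.2)), wsubf 1 k.-1 v.1.2))
     _ _ _ _ (@hdist n));
  by move=> w; rewrite /jointRV !Wsub_f.
by rewrite e1 e2.
Qed.

Lemma stepC n : cent P q (A k T' n) Z <= cmi P q Wh (Y2n n) Wl.
Proof.
have dh := det_Wall_Wsub (P:=P) (K:=K) (W:=W) k K.
have dl := det_Wall_Wsub (P:=P) (K:=K) (W:=W) 1 k.-1.
have a6 := det_split (P:=P) (K:=K) (W:=W) k1.
have c1 : H (jointRV Wh Wl) = H Wal.
  by apply: ent_equiv; det_auto.
have c2 : H (jointRV (jointRV Wh (Y2n n)) Wl) <= H (jointRV Wal (Cn n)).
  apply: (ent_le_det HP0 HP1 Hq); have h := @dA2n n; det_auto.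
have c3 := mi_ge0 HP0 HP1 Hq Wal (Cn n).
have c4 : mi P q Wl (Cn n) <= mi P q Wal D.
  apply: (mi_mono HP0 HP1 Hq) => //; have h := @dQn k T' n; det_auto.
have c5 : H (jointRV Wl (Cn n)) = H (jointRV (Cn n) Wl) by apply: ent_equiv; det_auto.
have c6 : cent P q (A k T' n) Z <= cent P q (A k T' n) (jointRV (Cn n) Wl).
  apply: (cond_red HP0 HP1 Hq); have h := @dQn k T' n; det_auto.
have c7 : H (jointRV (A k T' n) (jointRV (Cn n) Wl)) = H (jointRV (Y2n n) Wl).
  by apply: ent_equiv; det_auto.
move: c3 c4 c6; rewrite indep /mi /cmi /cent c5 c7 -c1; lra.
Qed.

Lemma stepD : cent P q A2 Z <= \sum_n cent P q (A k T' n) Z.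
Proof.
apply: (cent_subadd HP0 HP1 Hq (A := fun n => A k T' n)) => w n.
by rewrite ffunE.
Qed.

Lemma stepE : cmi P q Wh Y2 Wl <= cent P q A2 Z.
Proof.
have dh := det_Wall_Wsub (P:=P) (K:=K) (W:=W) k K.
have dl := det_Wall_Wsub (P:=P) (K:=K) (W:=W) 1 k.-1.
have a6 := det_split (P:=P) (K:=K) (W:=W) k1.
have e1 : H (jointRV Wh Wl) = H Wal by apply: ent_equiv; det_auto.
have e2 : H (jointRV Wal C) <= H (jointRV (jointRV Wh Y2) Wl).
  by apply: (ent_le_det HP0 HP1 Hq); det_auto.
have e3 : mi P q Wal C <= mi P q Wal D.
  by apply: (mi_mono HP0 HP1 Hq); det_auto.
have e4 := mi_ge0 HP0 HP1 Hq C Wl.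
have e5 : H (jointRV Y2 Wl) = H (jointRV A2 Z) by apply: ent_equiv; det_auto.
move: e2 e3 e4; rewrite indep /mi /cmi /cent e1 e5; lra.
Qed.

Lemma stepF : cmi P q Wh Y2 Wl = cmi P q (W k) Y2 Wl + cmi P q Wh' Y2 Wl'.
Proof.
have dh := det_Wall_Wsub (P:=P) (K:=K) (W:=W) k K.
have dl := det_Wall_Wsub (P:=P) (K:=K) (W:=W) 1 k.-1.
have dh' := det_Wall_Wsub (P:=P) (K:=K) (W:=W) k.+1 K.
have dl' := det_Wall_Wsub (P:=P) (K:=K) (W:=W) 1 k.
have a6 := det_split (P:=P) (K:=K) (W:=W) k1.
have a8 := det_split' (P:=P) (K:=K) (W:=W) (erefl k.+1).
have f1 : H (jointRV Wh Wl) = H (jointRV Wh' Wl') by apply: ent_equiv; det_auto.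
clear dh dl dh' dl' a6 a8.
have a7 := det_ext (P:=P) (K:=K) (W:=W) k1.
have b1 : det P Wl' (W k).
  apply: det_Wsub_W; first by rewrite leqnn (ltn_trans _ k2).
  by rewrite kK (ltn_trans _ k2).
have b2 : det P Wl' Wl by apply: det_Wsub_sub => //; exact: leq_pred.
have f2 : H (jointRV (W k) Wl) = H Wl' by apply: ent_equiv; det_auto.
have f3 : H (jointRV (jointRV (W k) Y2) Wl) = H (jointRV Y2 Wl') by apply: ent_equiv; det_auto.
clear a7 b1 b2.
have dh := det_Wall_Wsub (P:=P) (K:=K) (W:=W) k K.
have dl := det_Wall_Wsub (P:=P) (K:=K) (W:=W) 1 k.-1.
have dh' := det_Wall_Wsub (P:=P) (K:=K) (W:=W) k.+1 K.
have dl' := det_Wall_Wsub (P:=P) (K:=K) (W:=W) 1 k.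
have a6 := det_split (P:=P) (K:=K) (W:=W) k1.
have a8 := det_split' (P:=P) (K:=K) (W:=W) (erefl k.+1).
have f4 : H (jointRV (jointRV Wh Y2) Wl) = H (jointRV (jointRV Wh' Y2) Wl')
  by apply: ent_equiv; det_auto.
exact: (cmi_chain f1 f2 f3 f4).
Qed.

Lemma stepH : cent P q (W k) Y2 <= 0.
Proof.
have k0 : (0 < k <= K)%N by rewrite kK (ltn_trans _ k2).
have h1 : H (jointRV (jointRV (W k) Fr) Y2) = H (jointRV Fr Y2).
  have d1 := dRU; apply: ent_equiv; det_auto.
have h2 : cmi P q (W k) Fr Y2 <= cmi P q Wal Fr Y2.
  apply: (cmi_mono1 HP0 HP1 Hq); exact: det_Wall_W.
have h3 : H (jointRV Wal Y2) <= H (jointRV Wal C).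
  have d1 := dA2; apply: (ent_le_det HP0 HP1 Hq); det_auto.
have h4 := mi_ge0 HP0 HP1 Hq Wal C.
have h5 : cent P q Fr Y2 <= cent P q Fr C by apply: (cond_red HP0 HP1 Hq); det_auto.
have h6 : H (jointRV Wal D) <= H (jointRV (jointRV Wal Fr) Y2).
  have d1 := dRU; apply: (ent_le_det HP0 HP1 Hq); det_auto.
have h8 : H (jointRV Fr C) <= H D by apply: (ent_le_det HP0 HP1 Hq); det_auto.
move: h2 h4 h5 indep; rewrite /mi /cmi /cent h1; lra.
Qed.

Lemma stepG : L%:R <= cmi P q (W k) Y2 Wl.
Proof.
have a7 := det_ext (P:=P) (K:=K) (W:=W) k1.
have a8 := det_split' (P:=P) (K:=K) (W:=W) (erefl k.+1).
have g1 : cent P q (W k) (jointRV Y2 Wl) <= cent P q (W k) Y2.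
  by apply: (cond_red HP0 HP1 Hq); det_auto.
have g2 : H (jointRV (jointRV (W k) Y2) Wl) = H (jointRV (W k) (jointRV Y2 Wl)).
  by apply: ent_equiv; det_auto.
have g4 := ent_le_det HP0 HP1 Hq a7.
have g5 := ent_le_det HP0 HP1 Hq a8.
have g6 := mi_ge0 HP0 HP1 Hq Wl' Wh'.
have g7 : H Wal = (K * L)%:R.
  apply: (ent_unif Hq) => //.
  by rewrite card_ffun card_ffun !card_ord -expnM mulnC.
have g8 := @Wsub_bound 0 k.-1 (leq_trans (leq_pred k) kK).
have g9 := @Wsub_bound k K (leqnn K).
apply: (stepG_arith g1 g2 stepH g4 g5 g6 g7 g8 g9).
rewrite subn0 -!natrD; congr (_%:R).
rewrite -mulnDl -[X in (_ + X)%N]mul1n -mulnDl; congr (_ * _)%N.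
have := k1; lia.
Qed.

Lemma main_ineq :
  cmi P q (Wsub K W k K) (jointRV (jointRV (Qall Q k.-1 T) (Aall A k.-1 T)) RS)
      (Wsub K W 1 k.-1)
  >= N%:R^-1 * cmi P q (Wsub K W k.+1 K)
                  (jointRV (jointRV (Qall Q k T') (Aall A k T')) RS)
                  (Wsub K W 1 k)
     + L%:R / N%:R.
Proof.
have hs : \sum_(n : 'I_N) cent P q (A k T' n) Z <= N%:R * cmi P q Wh Y1 Wl.
  apply: le_trans (_ : \sum_(n : 'I_N) cmi P q Wh Y1 Wl <= _).
    apply: ler_sum => n _; apply: le_trans (stepC n) _.
    rewrite -(stepB n); exact: stepA n.
  by rewrite sumr_const card_ord mulr_natl.
have n0 : 0 < N%:R :> R by rewrite ltr0n.
exact: (final_arith n0 stepE stepD hs stepF stepG).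
Qed.

End Main.

Unset Implicit Arguments.

Theorem lemma2 (R : realType) (Omega : finType) (P : {ffun Omega -> R})
  (Fq : finFieldType) (S QT AT FT : finType) (K L N M m : nat)
  (W : nat -> Omega -> {ffun 'I_L -> Fq}) (RS : Omega -> {ffun 'I_M -> S})
  (Fr : Omega -> FT)
  (Q : nat -> {set 'I_M} -> 'I_N -> Omega -> QT)
  (A : nat -> {set 'I_M} -> 'I_N -> Omega -> AT)
  (k : nat) (T T' : {set 'I_M}) :
  (1 <= N)%N -> (2 <= K)%N ->
  valid_scheme K W RS Fr Q A P m ->
  (2 <= k <= K)%N -> #|T| = m ->
  (* T' is the user-side randomness R_U' given by (C6) for indices k-1, k *)
  #|T'| = m ->
  ent P #|Fq| (RU RS T') = ent P #|Fq| (RU RS T) ->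
  (forall n x,
     pr P (jointRV (jointRV (jointRV (Q k.-1 T n) (A k.-1 T n)) (Wall K W)) RS) x
   = pr P (jointRV (jointRV (jointRV (Q k T' n) (A k T' n)) (Wall K W)) RS) x) ->
  cmi P #|Fq| (Wsub K W k K)
      (jointRV (jointRV (Qall Q k.-1 T) (Aall A k.-1 T)) RS)
      (Wsub K W 1 k.-1)
  >= N%:R^-1 * cmi P #|Fq| (Wsub K W k.+1 K)
                  (jointRV (jointRV (Qall Q k T') (Aall A k T')) RS)
                  (Wsub K W 1 k)
     + L%:R / N%:R.
Proof.
move=> N1 K2 [[HP0 HP1] [Hunif [C1 [C2 [C3 [C4 [C5 [C6 [C7 C8]]]]]]]]]
  /andP[k2 kK] cT cT' hent hdist.
have k1K : (1 <= k <= K)%N by rewrite kK (leq_trans _ k2).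
have Hq : (1 < #|Fq|)%N := card_finNzRing_gt1 Fq.
have dQ2 : det P Fr (Qall Q k T') := cent0_det HP0 Hq (C3 k T' k1K cT').
have dA2n : forall n, det P (jointRV (jointRV (Q k T' n) (Wall K W)) RS) (A k T' n).
  by move=> n; apply: (cent0_det HP0 Hq); apply: C4.
have dWk : det P (jointRV (jointRV Fr (Aall A k T')) (RU RS T')) (W k).
  by apply: (cent0_det HP0 Hq); apply: C5.
have indep := C1 T' cT'.
exact: (main_ineq HP0 HP1 N1 k2 kK dQ2 dA2n dWk indep Hunif hdist).
Qed.
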